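(* Let $n\ge2$, $\rho^*\ge0$, $k_\rho,k_z,k_\phi,k_\omega>0$, and nonnegative constants $\xi_1,\dots,\xi_n$ with average $\bar\xi=\frac1n\sum_{i=1}^n\xi_i$. Consider the closed-loop system, for $i=1,\dots,n$, $$\dot\rho_i=k_\rho(\rho^*-\rho_i),\quad \dot\omega_i=k_\omega(\bar\phi_i-\phi_i),\ \omega_i(t_0)=0,\quad \dot\phi_i=\omega_i+k_\phi(\bar\phi_i-\phi_i)+\xi_i,\quad \dot z_i=-k_zz_i,$$ with $\bar\phi_i$ as defined in the context. Then for every initial condition of $(\rho_i,\phi_i,z_i)$ (and $\omega_i(t_0)=0$), as $t\to\infty$, exponentially: $\rho_i\to\rho^*$, $\phi_i-\bar\phi_i\to0$, $\dot\phi_i\to\bar\xi$, and $z_i\to0$, for all $i$.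
   Context: There are $n$ robots with cylindrical coordinates $(\rho_i,\phi_i,z_i)$ relative to a target frame (radius, phase, height), whose dynamics after a feedback transformation are $\dot\rho_i,\dot\phi_i,\dot z_i$ equal to free inputs; $\omega_i$ is an internal controller state. The phases $\phi_i(t)$ are real-valued (not reduced modulo $2\pi$), robots indexed in counterclockwise phase order at the initial time. Phase averages: $\bar\phi_1=\frac{\phi_2+\phi_n-2\pi}{2}$, $\bar\phi_i=\frac{\phi_{i+1}+\phi_{i-1}}{2}$ for $2\le i\le n-1$, $\bar\phi_n=\frac{\phi_1+2\pi+\phi_{n-1}}{2}$. *)

(* Defs.v *)
From Stdlib Require Import Reals Lra Lia.
Open Scope R_scope.

(* Robots are indexed 1..n (as in the paper). [phi i t] is the real-valued
   (unwrapped) phase of robot i at time t. *)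
Definition phibar (n : nat) (phi : nat -> R -> R) (i : nat) (t : R) : R :=
  if Nat.eqb i 1 then (phi 2%nat t + phi n t - 2 * PI) / 2
  else if Nat.eqb i n then (phi 1%nat t + 2 * PI + phi (n - 1)%nat t) / 2
  else (phi (i + 1)%nat t + phi (i - 1)%nat t) / 2.

Definition exp_conv (t0 : R) (f : R -> R) (l : R) : Prop :=
  exists c lam : R, 0 < lam /\ forall t, t0 <= t -> Rabs (f t - l) <= c * exp (- lam * (t - t0)).

(* Main.v *)
Require Import Defs.
From Stdlib Require Import Reals Lra Lia Psatz FunctionalExtensionality.
Open Scope R_scope.

Lemma dplus f g x a b : derivable_pt_lim f x a -> derivable_pt_lim g x b ->
  derivable_pt_lim (fun t => f t + g t) x (a + b).
Proof. intros H1 H2. exact (derivable_pt_lim_plus _ _ _ _ _ H1 H2). Qed.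
Lemma dminus f g x a b : derivable_pt_lim f x a -> derivable_pt_lim g x b ->
  derivable_pt_lim (fun t => f t - g t) x (a - b).
Proof. intros H1 H2. exact (derivable_pt_lim_minus _ _ _ _ _ H1 H2). Qed.
Lemma dmult f g x a b : derivable_pt_lim f x a -> derivable_pt_lim g x b ->
  derivable_pt_lim (fun t => f t * g t) x (a * g x + f x * b).
Proof. intros H1 H2. exact (derivable_pt_lim_mult _ _ _ _ _ H1 H2). Qed.
Lemma dconst c x : derivable_pt_lim (fun _ => c) x 0.
Proof. exact (derivable_pt_lim_const c x). Qed.
Lemma dscal c f x a : derivable_pt_lim f x a -> derivable_pt_lim (fun t => c * f t) x (c * a).
Proof. intros H. exact (derivable_pt_lim_scal _ _ _ _ H). Qed.
Lemma dext f g x a : (forall t, f t = g t) -> derivable_pt_lim f x a -> derivable_pt_lim g x a.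
Proof. intros H D. replace g with f; auto. apply functional_extensionality; auto. Qed.

Fixpoint sm (m : nat) (f : nat -> R) : R :=
  match m with O => 0 | S p => sm p f + f (S p) end.

Lemma sm_S m f : sm (S m) f = sm m f + f (S m). Proof. reflexivity. Qed.

Lemma sm_ext m f g : (forall i, (1 <= i <= m)%nat -> f i = g i) -> sm m f = sm m g.
Proof. induction m; intros H; simpl; auto. rewrite IHm by (intros; apply H; lia). rewrite H by lia. reflexivity. Qed.

Lemma sm_lin m a b f g : sm m (fun i => a * f i + b * g i) = a * sm m f + b * sm m g.
Proof. induction m; simpl; [ring|]. rewrite IHm; ring. Qed.

Lemma sm_const m c : sm m (fun _ => c) = INR m * c.
Proof. induction m; simpl sm; [simpl; ring|]. rewrite IHm, S_INR; ring. Qed.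

Lemma sm_le m f g : (forall i, (1 <= i <= m)%nat -> f i <= g i) -> sm m f <= sm m g.
Proof. induction m; intros H; simpl; [lra|]. assert (sm m f <= sm m g) by (apply IHm; intros; apply H; lia).
  assert (f (S m) <= g (S m)) by (apply H; lia). lra. Qed.

Lemma sm_nonneg m f : (forall i, (1 <= i <= m)%nat -> 0 <= f i) -> 0 <= sm m f.
Proof. intros H. rewrite <- (Rmult_0_r (INR m)), <- sm_const. apply sm_le; auto. Qed.

Lemma sm_single m f i : (forall j, (1 <= j <= m)%nat -> 0 <= f j) -> (1 <= i <= m)%nat -> f i <= sm m f.
Proof. induction m; intros H Hi; [lia|]. simpl.
  destruct (Nat.eq_dec i (S m)) as [->|Hne].
  - assert (0 <= sm m f) by (apply sm_nonneg; intros; apply H; lia). lra.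
  - assert (f i <= sm m f) by (apply IHm; [intros; apply H; lia| lia]).
    assert (0 <= f (S m)) by (apply H; lia). lra. Qed.

Lemma sm_mono m p f : (m <= p)%nat -> (forall j, (1 <= j <= p)%nat -> 0 <= f j) -> sm m f <= sm p f.
Proof. induction p; intros Hm H.
  - replace m with 0%nat by lia. lra.
  - destruct (Nat.eq_dec m (S p)) as [->|Hne]; [lra|].
    simpl. assert (sm m f <= sm p f) by (apply IHp; [lia|intros; apply H; lia]).
    assert (0 <= f (S p)) by (apply H; lia). lra. Qed.

Lemma sm_first m f : sm (S m) f = f 1%nat + sm m (fun i => f (S i)).
Proof. induction m; [simpl; ring|]. rewrite sm_S, IHm, (sm_S m). ring. Qed.

Definition nxt (n i : nat) : nat := if Nat.eqb i n then 1%nat else S i.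
Definition prv (n i : nat) : nat := if Nat.eqb i 1 then n else (i - 1)%nat.

Lemma nxt_range n i : (1 <= i <= n)%nat -> (1 <= nxt n i <= n)%nat.
Proof. intros H. unfold nxt. destruct (Nat.eqb_spec i n); lia. Qed.
Lemma prv_range n i : (1 <= i <= n)%nat -> (1 <= prv n i <= n)%nat.
Proof. intros H. unfold prv. destruct (Nat.eqb_spec i 1); lia. Qed.
Lemma prv_nxt n i : (1 <= i <= n)%nat -> prv n (nxt n i) = i.
Proof. intros H. unfold nxt, prv. destruct (Nat.eqb_spec i n).
  - simpl. lia.
  - destruct (Nat.eqb_spec (S i) 1); lia. Qed.

Lemma sm_shift n f : (1 <= n)%nat -> sm n (fun i => f (nxt n i)) = sm n f.
Proof. intros Hn. destruct n as [|m]; [lia|].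
  rewrite sm_S, sm_first. unfold nxt at 2. rewrite Nat.eqb_refl.
  rewrite (sm_ext m _ (fun i => f (S i))). ring.
  intros i Hi. unfold nxt. destruct (Nat.eqb_spec i (S m)); [lia|auto]. Qed.

Lemma sm_shift_prv n f : (1 <= n)%nat -> sm n (fun i => f (prv n i)) = sm n f.
Proof. intros Hn. rewrite <- (sm_shift n (fun i => f (prv n i))) by auto.
  apply sm_ext. intros i Hi. rewrite prv_nxt; auto. Qed.

Lemma sum_delta n a b : (1 <= n)%nat ->
  sm n (fun i => a i * ((b (nxt n i) + b (prv n i)) / 2 - b i)) =
  -(1/2) * sm n (fun i => (a (nxt n i) - a i) * (b (nxt n i) - b i)).
Proof. intros Hn.
  rewrite (sm_ext n _ (fun i => (1/2) * (a i * (b (nxt n i) - b i)) + (1/2) * (a i * (b (prv n i) - b i))))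
    by (intros; field).
  rewrite sm_lin.
  rewrite <- (sm_shift n (fun i => a i * (b (prv n i) - b i))) by auto.
  rewrite (sm_ext n (fun i => a (nxt n i) * (b (prv n (nxt n i)) - b (nxt n i)))
             (fun i => a (nxt n i) * (b i - b (nxt n i))))
    by (intros; rewrite prv_nxt; auto).
  rewrite (sm_ext n (fun i => (a (nxt n i) - a i) * (b (nxt n i) - b i))
     (fun i => (-1) * (a i * (b (nxt n i) - b i)) + (-1) * (a (nxt n i) * (b i - b (nxt n i)))))
    by (intros; ring).
  rewrite sm_lin. ring. Qed.

Lemma sum_f_sm k f : sum_f_R0 (fun j => f (S j)) k = sm (S k) f.
Proof. induction k; [simpl; ring|]. simpl sum_f_R0. rewrite IHk. reflexivity. Qed.

Lemma telescope m x : sm m (fun j => x (S j) - x j) = x (S m) - x 1%nat.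
Proof. induction m; simpl; [ring|]. rewrite IHm. ring. Qed.

Lemma cs m f : (sm m f) ^ 2 <= INR m * sm m (fun i => f i ^ 2).
Proof. induction m; [simpl; lra|]. rewrite !sm_S, S_INR.
  set (A := sm m f) in *. set (Q := sm m (fun i => f i ^ 2)) in *. set (a := f (S m)).
  assert (HQ : 0 <= Q) by (apply sm_nonneg; intros; apply pow2_ge_0).
  assert (Hm : 0 <= INR m) by apply pos_INR.
  assert (2 * A * a <= Q + INR m * a ^ 2).
  { assert ((2*A*a)^2 <= (Q + INR m * a^2)^2).
    { replace ((2*A*a)^2) with (4 * A^2 * a^2) by ring.
      apply Rle_trans with (4 * (INR m * Q) * a^2).
      - apply Rmult_le_compat_r; [apply pow2_ge_0|]. lra.
      - assert (0 <= (Q - INR m * a^2)^2) by apply pow2_ge_0. nra. }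
    assert (0 <= Q + INR m * a^2) by (assert (0 <= INR m * a^2) by (apply Rmult_le_pos; [lra|apply pow2_ge_0]); lra).
    destruct (Rle_or_lt (2*A*a) 0); [lra|]. nra. }
  nra. Qed.

Lemma poincare n x : (1 <= n)%nat -> sm n x = 0 ->
  sm n (fun i => x i ^ 2) <= INR n * INR n * sm n (fun i => (x (nxt n i) - x i) ^ 2).
Proof. intros Hn H0.
  set (S2 := sm n (fun i => (x (nxt n i) - x i) ^ 2)).
  assert (HS : 0 <= S2) by (apply sm_nonneg; intros; apply pow2_ge_0).
  assert (E1 : sm n (fun i => x i ^ 2) = sm n (fun i => 1 * (x i * (x i - x 1%nat)) + x 1%nat * x i)).
  { apply sm_ext; intros; ring. }
  rewrite sm_lin, H0 in E1.
  assert (E2 : sm n (fun i => x i * (x i - x 1%nat)) <= sm n (fun i => (1/2) * x i ^ 2 + (1/2) * (x i - x 1%nat) ^ 2)).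
  { apply sm_le; intros. assert (0 <= (x i - (x i - x 1%nat))^2) by apply pow2_ge_0. nra. }
  rewrite sm_lin in E2.
  assert (E3 : sm n (fun i => (x i - x 1%nat) ^ 2) <= sm n (fun _ => INR n * S2)).
  { apply sm_le. intros i Hi.
    assert (Ht : x i - x 1%nat = sm (i - 1) (fun j => x (nxt n j) - x j)).
    { rewrite (sm_ext (i-1) _ (fun j => x (S j) - x j)).
      - rewrite telescope. replace (S (i-1)) with i by lia. reflexivity.
      - intros j Hj. unfold nxt. destruct (Nat.eqb_spec j n); [lia|auto]. }
    rewrite Ht. eapply Rle_trans; [apply cs|].
    apply Rmult_le_compat.
    - apply pos_INR.
    - apply sm_nonneg; intros; apply pow2_ge_0.
    - apply le_INR; lia.
    - apply sm_mono; [lia|]. intros; apply pow2_ge_0. }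
  rewrite sm_const in E3. lra. Qed.

Lemma exp_decay (f f' : R -> R) t0 mu :
  (forall t, t0 <= t -> derivable_pt_lim f t (f' t)) ->
  (forall t, t0 <= t -> f' t <= - mu * f t) ->
  forall t, t0 <= t -> f t <= f t0 * exp (- mu * (t - t0)).
Proof. intros Hd Hle t Ht.
  set (g := fun s => f s * exp (mu * (s - t0))).
  set (g' := fun s => f' s * exp (mu * (s - t0)) + f s * (exp (mu * (s - t0)) * mu)).
  assert (Hg : forall s, t0 <= s -> derivable_pt_lim g s (g' s)).
  { intros s Hs. unfold g, g'. apply (dmult f (fun s => exp (mu * (s - t0)))); auto.
    assert (D : derivable_pt_lim (fun s => mu * (s - t0)) s (mu * (1 - 0))).
    { apply dscal. apply dminus; [apply derivable_pt_lim_id| apply dconst]. }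
    replace (exp (mu * (s - t0)) * mu) with (exp (mu * (s - t0)) * (mu * (1 - 0))) by ring.
    pose proof (derivable_pt_lim_comp (fun s => mu * (s - t0)) exp s _ _ D (derivable_pt_lim_exp (mu * (s - t0)))) as C.
    exact C. }
  assert (Hgt : g t <= g t0).
  { destruct (Req_dec t t0) as [->|Hne]; [lra|].
    destruct (MVT_cor2 g g' t0 t) as [c [Hc1 Hc2]]; [lra| intros; apply Hg; lra|].
    assert (g' c <= 0).
    { unfold g'. assert (Hex := exp_pos (mu * (c - t0))). assert (H := Hle c ltac:(lra)).
      replace (f' c * exp (mu * (c - t0)) + f c * (exp (mu * (c - t0)) * mu)) with
        ((f' c + mu * f c) * exp (mu * (c - t0))) by ring.
      assert (f' c + mu * f c <= 0) by lra. nra. }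
    nra. }
  unfold g in Hgt. replace (t0 - t0) with 0 in Hgt by ring. rewrite Rmult_0_r, exp_0, Rmult_1_r in Hgt.
  assert (f t = f t * exp (mu * (t - t0)) * exp (- mu * (t - t0))).
  { rewrite Rmult_assoc, <- exp_plus. replace (mu * (t - t0) + - mu * (t - t0)) with 0 by ring.
    rewrite exp_0; ring. }
  rewrite H. apply Rmult_le_compat_r; [apply Rlt_le, exp_pos|auto]. Qed.

Lemma sm_scal m a f : sm m (fun i => a * f i) = a * sm m f.
Proof. induction m; simpl; [ring|]. rewrite IHm; ring. Qed.
Lemma sm_add m f g : sm m (fun i => f i + g i) = sm m f + sm m g.
Proof. induction m; simpl; [ring|]. rewrite IHm; ring. Qed.

Section K.
Definition PP (n : nat) := INR n * INR n.
Definition eps (n : nat) (k kw : R) :=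
  Rmin (Rmin (kw * k / 2 / (k ^ 2 / 4 + kw * PP n)) (1 / (2 * PP n))) kw.
Definition mu (n : nat) (k kw : R) := Rmin (k / (3 * PP n)) (eps n k kw / 3).
Definition cc (n : nat) (kw : R) := Rmin (kw / 2) (1 / (4 * PP n)).

Definition Vf n k kw (e w : nat -> R) :=
  kw * sm n (fun i => e i ^ 2) + (1/2) * sm n (fun i => (w (nxt n i) - w i) ^ 2)
  + eps n k kw * sm n (fun i => e i * w i).
Definition Vdot n k kw (e w de dw : nat -> R) :=
  kw * sm n (fun i => 2 * (e i * de i)) +
  (1/2) * sm n (fun i => 2 * ((w (nxt n i) - w i) * (dw (nxt n i) - dw i)))
  + eps n k kw * sm n (fun i => de i * w i + e i * dw i).
End K.

Lemma consts n k kw : (2 <= n)%nat -> 0 < k -> 0 < kw ->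
  0 < PP n /\ 0 < eps n k kw /\ eps n k kw * (k ^ 2 / 4 + kw * PP n) <= kw * k / 2 /\
  eps n k kw * PP n <= 1/2 /\ eps n k kw <= kw /\ 0 < mu n k kw /\
  mu n k kw <= k / (3 * PP n) /\ mu n k kw <= eps n k kw / 3 /\
  0 < cc n kw /\ cc n kw <= kw / 2 /\ cc n kw <= 1 / (4 * PP n).
Proof. intros Hn Hk Hkw.
  assert (HP : 0 < PP n). { unfold PP. assert (0 < INR n) by (apply lt_0_INR; lia). nra. }
  assert (Hd : 0 < k ^ 2 / 4 + kw * PP n) by (assert (0 <= k^2) by apply pow2_ge_0; nra).
  set (a := kw * k / 2 / (k ^ 2 / 4 + kw * PP n)).
  set (b := 1 / (2 * PP n)).
  assert (Ha : 0 < a) by (unfold a; apply Rdiv_lt_0_compat; [nra|lra]).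
  assert (Hb : 0 < b) by (unfold b; apply Rdiv_lt_0_compat; lra).
  assert (He1 : eps n k kw <= a) by (unfold eps; fold a b; eapply Rle_trans; [apply Rmin_l|apply Rmin_l]).
  assert (He2 : eps n k kw <= b) by (unfold eps; fold a b; eapply Rle_trans; [apply Rmin_l|apply Rmin_r]).
  assert (He3 : eps n k kw <= kw) by (unfold eps; apply Rmin_r).
  assert (He0 : 0 < eps n k kw) by (unfold eps; fold a b; repeat apply Rmin_glb_lt; auto).
  split; auto. split; auto. split.
  { apply Rle_trans with (a * (k ^ 2 / 4 + kw * PP n)); [apply Rmult_le_compat_r; lra|].
    unfold a. right. field. lra. }
  split.
  { apply Rle_trans with (b * PP n); [apply Rmult_le_compat_r; lra|]. unfold b. right. field. lra. }
  split; auto.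
  assert (0 < k / (3 * PP n)) by (apply Rdiv_lt_0_compat; lra).
  split. { unfold mu. apply Rmin_glb_lt; lra. }
  split. { apply Rmin_l. } split. { apply Rmin_r. }
  assert (0 < 1 / (4 * PP n)) by (apply Rdiv_lt_0_compat; lra).
  split. { unfold cc. apply Rmin_glb_lt; lra. }
  split. apply Rmin_l. apply Rmin_r. Qed.

Lemma key n k kw (e w de dw : nat -> R) : (2 <= n)%nat -> 0 < k -> 0 < kw ->
  (forall i, (1 <= i <= n)%nat ->
     de i = ((w (nxt n i) + k * e (nxt n i)) + (w (prv n i) + k * e (prv n i))) / 2 - (w i + k * e i)) ->
  (forall i, (1 <= i <= n)%nat -> dw i = kw * e i) ->
  sm n e = 0 -> sm n w = 0 ->
  Vdot n k kw e w de dw <= - mu n k kw * Vf n k kw e w /\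
  cc n kw * (sm n (fun i => e i ^ 2) + sm n (fun i => w i ^ 2)) <= Vf n k kw e w.
Proof. intros Hn Hk Hkw Hde Hdw He Hw.
  destruct (consts n k kw Hn Hk Hkw) as (HP & He0 & He1 & He2 & He3 & Hm0 & Hm1 & Hm2 & Hc0 & Hc1 & Hc2).
  assert (Hn1 : (1 <= n)%nat) by lia.
  set (u := fun j => w j + k * e j).
  set (Ne := sm n (fun i => e i ^ 2)). set (Nw := sm n (fun i => w i ^ 2)).
  set (Ge := sm n (fun i => (e (nxt n i) - e i) ^ 2)).
  set (Gw := sm n (fun i => (w (nxt n i) - w i) ^ 2)).
  set (X := sm n (fun i => (e (nxt n i) - e i) * (w (nxt n i) - w i))).
  set (Y := sm n (fun i => e i * w i)).
  set (ep := eps n k kw) in *. set (m := mu n k kw) in *. set (c := cc n kw) in *.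
  set (P := PP n) in *.
  assert (S1 : sm n (fun i => e i * de i) = -(1/2) * (X + k * Ge)).
  { rewrite (sm_ext n _ (fun i => e i * ((u (nxt n i) + u (prv n i)) / 2 - u i)))
      by (intros; rewrite Hde; auto).
    rewrite sum_delta by auto. f_equal.
    unfold X, Ge. rewrite <- sm_scal, <- sm_add. apply sm_ext. intros; unfold u; ring. }
  assert (S2 : sm n (fun i => (w (nxt n i) - w i) * (dw (nxt n i) - dw i)) = kw * X).
  { unfold X. rewrite <- sm_scal. apply sm_ext. intros i Hi.
    rewrite !Hdw by (auto; apply nxt_range; auto). ring. }
  assert (S3 : sm n (fun i => de i * w i) = -(1/2) * (Gw + k * X)).
  { rewrite (sm_ext n _ (fun i => w i * ((u (nxt n i) + u (prv n i)) / 2 - u i)))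
      by (intros; rewrite Hde; auto; unfold u; ring).
    rewrite sum_delta by auto. f_equal.
    unfold X, Gw. rewrite <- sm_scal, <- sm_add. apply sm_ext. intros; unfold u; ring. }
  assert (S4 : sm n (fun i => e i * dw i) = kw * Ne).
  { unfold Ne. rewrite <- sm_scal. apply sm_ext. intros i Hi. rewrite Hdw by auto. ring. }
  assert (VD : Vdot n k kw e w de dw = - kw * k * Ge - ep * Gw / 2 - ep * k * X / 2 + ep * kw * Ne).
  { unfold Vdot. fold ep. rewrite !sm_scal, sm_add, S1, S2, S3, S4. field. }
  assert (VV : Vf n k kw e w = kw * Ne + Gw / 2 + ep * Y).
  { unfold Vf. fold ep Ne Gw Y. field. }
  assert (B1 : - (Gw + k^2 * Ge) / 2 <= k * X).
  { assert (H : sm n (fun i => (-1/2) * (w (nxt n i) - w i) ^ 2 + (-(k^2/2)) * (e (nxt n i) - e i) ^ 2)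
       <= sm n (fun i => k * ((e (nxt n i) - e i) * (w (nxt n i) - w i)))).
    { apply sm_le. intros i Hi.
      assert (0 <= (w (nxt n i) - w i + k * (e (nxt n i) - e i))^2) by apply pow2_ge_0. nra. }
    rewrite sm_lin, sm_scal in H. fold Gw Ge X in H. lra. }
  assert (B2 : - (Ne + Nw) / 2 <= Y /\ Y <= (Ne + Nw) / 2).
  { unfold Ne, Nw, Y. split.
    - replace (- (sm n (fun i => e i ^ 2) + sm n (fun i => w i ^ 2)) / 2) with
        ((-1/2) * (sm n (fun i => e i ^ 2) + sm n (fun i => w i ^ 2))) by field.
      rewrite <- sm_add, <- sm_scal. apply sm_le. intros.
      assert (0 <= (e i + w i)^2) by apply pow2_ge_0. nra.
    - replace ((sm n (fun i => e i ^ 2) + sm n (fun i => w i ^ 2)) / 2) with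
        ((1/2) * (sm n (fun i => e i ^ 2) + sm n (fun i => w i ^ 2))) by field.
      rewrite <- sm_add, <- sm_scal. apply sm_le. intros.
      assert (0 <= (e i - w i)^2) by apply pow2_ge_0. nra. }
  assert (PE : Ne <= P * Ge) by (apply poincare; auto).
  assert (PW : Nw <= P * Gw) by (apply poincare; auto).
  assert (G1 : 0 <= Ge) by (apply sm_nonneg; intros; apply pow2_ge_0).
  assert (G2 : 0 <= Gw) by (apply sm_nonneg; intros; apply pow2_ge_0).
  assert (N1 : 0 <= Ne) by (apply sm_nonneg; intros; apply pow2_ge_0).
  assert (N2 : 0 <= Nw) by (apply sm_nonneg; intros; apply pow2_ge_0).
  rewrite VD, VV. split.
  - assert (D1 : - kw * k * Ge - ep * Gw / 2 - ep * k * X / 2 + ep * kw * Ne <= -(kw * k / 2) * Ge - (ep / 4) * Gw).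
    { assert (ep * (k * X) >= ep * (- (Gw + k^2 * Ge) / 2)) by (apply Rle_ge, Rmult_le_compat_l; lra).
      assert (ep * kw * Ne <= ep * kw * (P * Ge)) by (apply Rmult_le_compat_l; nra).
      assert (ep * (k ^ 2 / 4 + kw * P) * Ge <= kw * k / 2 * Ge) by (apply Rmult_le_compat_r; lra).
      nra. }
    assert (U1 : kw * Ne + Gw / 2 + ep * Y <= (3/2) * kw * P * Ge + (3/4) * Gw).
    { assert (ep * Y <= ep * ((Ne + Nw) / 2)) by (apply Rmult_le_compat_l; lra).
      assert (ep * Nw <= ep * (P * Gw)) by (apply Rmult_le_compat_l; lra).
      assert (ep * Ne <= kw * Ne) by (apply Rmult_le_compat_r; lra).
      assert (kw * Ne <= kw * (P * Ge)) by (apply Rmult_le_compat_l; lra).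
      assert (ep * P * Gw <= 1/2 * Gw) by (apply Rmult_le_compat_r; lra).
      nra. }
    assert (m * (kw * Ne + Gw / 2 + ep * Y) <= m * ((3/2) * kw * P * Ge + (3/4) * Gw)) by (apply Rmult_le_compat_l; lra).
    assert (m * ((3/2) * kw * P * Ge) <= (k / (3 * P)) * ((3/2) * kw * P * Ge)).
    { apply Rmult_le_compat_r; auto. assert (0 <= kw * P * Ge) by (apply Rmult_le_pos; nra). nra. }
    assert (m * ((3/4) * Gw) <= (ep / 3) * ((3/4) * Gw)) by (apply Rmult_le_compat_r; lra).
    replace ((k / (3 * P)) * ((3/2) * kw * P * Ge)) with ((kw * k / 2) * Ge) in * by (field; lra).
    nra.
  - assert (ep * Y >= ep * (- (Ne + Nw) / 2)) by (apply Rle_ge, Rmult_le_compat_l; lra).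
    assert (ep * Nw <= ep * (P * Gw)) by (apply Rmult_le_compat_l; lra).
    assert (ep * P * Gw <= 1/2 * Gw) by (apply Rmult_le_compat_r; lra).
    assert (ep * Ne <= kw * Ne) by (apply Rmult_le_compat_r; lra).
    assert (c * Ne <= kw / 2 * Ne) by (apply Rmult_le_compat_r; lra).
    assert (c * Nw <= 1 / (4 * P) * Nw) by (apply Rmult_le_compat_r; lra).
    assert (1 / (4 * P) * Nw <= 1 / (4 * P) * (P * Gw)) by (apply Rmult_le_compat_l; [apply Rlt_le, Rdiv_lt_0_compat; lra| lra]).
    replace (1 / (4 * P) * (P * Gw)) with (Gw / 4) in * by (field; lra).
    nra. Qed.

Lemma sq_bound x B : 0 <= B -> x ^ 2 <= B ^ 2 -> Rabs x <= B.
Proof. intros HB H. destruct (Rle_or_lt (Rabs x) B); auto.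
  assert (x ^ 2 = Rabs x ^ 2) by (rewrite <- pow2_abs; auto). nra. Qed.

Lemma exp_sq_bound x C mu s : 0 <= C -> x ^ 2 <= C * exp (- mu * s) ->
  Rabs x <= sqrt C * exp (- (mu / 2) * s).
Proof. intros HC H. apply sq_bound.
  - apply Rmult_le_pos; [apply sqrt_pos| apply Rlt_le, exp_pos].
  - replace ((sqrt C * exp (- (mu / 2) * s)) ^ 2) with ((sqrt C * sqrt C) * (exp (- (mu / 2) * s) * exp (- (mu / 2) * s))) by ring.
    rewrite sqrt_sqrt, <- exp_plus by auto. replace (- (mu / 2) * s + - (mu / 2) * s) with (- mu * s) by field. auto. Qed.

Lemma lin_decay f l k t0 : 0 < k ->
  (forall t, t0 <= t -> derivable_pt_lim f t (- k * (f t - l))) -> exp_conv t0 f l.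
Proof. intros Hk Hd.
  assert (H := exp_decay (fun t => (f t - l) ^ 2) (fun t => 2 * ((f t - l) * (- k * (f t - l)))) t0 (2 * k)).
  exists (sqrt ((f t0 - l) ^ 2)), k. split; auto. intros t Ht.
  replace (- k * (t - t0)) with (- (2 * k / 2) * (t - t0)) by field.
  apply exp_sq_bound; [apply pow2_ge_0|]. apply H; auto.
  - intros s Hs. apply (dext (fun t => (f t - l) * (f t - l))); [intros; ring|].
    replace (2 * ((f s - l) * (- k * (f s - l)))) with
      ((- k * (f s - l) - 0) * (f s - l) + (f s - l) * (- k * (f s - l) - 0)) by ring.
    apply (dmult (fun t => f t - l) (fun t => f t - l)); apply (dminus f (fun _ => l)); auto; apply dconst.
  - intros s Hs. simpl. right. ring. Qed.

Lemma dsm m (F : nat -> R -> R) (F' : nat -> R) x :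
  (forall j, (1 <= j <= m)%nat -> derivable_pt_lim (F j) x (F' j)) ->
  derivable_pt_lim (fun t => sm m (fun j => F j t)) x (sm m F').
Proof. induction m; intros H; simpl.
  - apply dconst.
  - apply (dplus (fun t => sm m (fun j => F j t)) (F (S m))).
    + apply IHm. intros; apply H; lia.
    + apply H; lia. Qed.

Lemma dsq f x a : derivable_pt_lim f x a -> derivable_pt_lim (fun t => f t ^ 2) x (2 * (f x * a)).
Proof. intros H. apply (dext (fun t => f t * f t)); [intros; ring|].
  replace (2 * (f x * a)) with (a * f x + f x * a) by ring. apply dmult; auto. Qed.

Definition cst (n j : nat) : R := if Nat.eqb j 1 then - PI else if Nat.eqb j n then PI else 0.

Lemma phibar_rep n phi j t : (2 <= n)%nat -> (1 <= j <= n)%nat ->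
  phibar n phi j t = (1/2) * (phi (nxt n j) t + phi (prv n j) t) + cst n j.
Proof. intros Hn Hj. unfold phibar, nxt, prv, cst.
  destruct (Nat.eqb_spec j 1) as [->|H1].
  - destruct (Nat.eqb_spec 1 n); [lia|]. field.
  - destruct (Nat.eqb_spec j n) as [->|H2]. field.
    replace (j + 1)%nat with (S j) by lia. field. Qed.

Lemma sm_delta m k a : (1 <= k)%nat -> sm m (fun j => if Nat.eqb j k then a else 0) = if Nat.leb k m then a else 0.
Proof. intros Hk. induction m.
  - simpl sm. destruct (Nat.leb_spec k 0); [lia|]. ring.
  - rewrite sm_S, IHm. change ((fun j => if j =? k then a else 0) (S m)) with (if S m =? k then a else 0).
    destruct (Nat.leb_spec k m), (Nat.leb_spec k (S m)), (Nat.eqb_spec (S m) k); try lia; ring. Qed.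

Lemma sm_cst n : (2 <= n)%nat -> sm n (cst n) = 0.
Proof. intros Hn.
  rewrite (sm_ext n _ (fun j => (if Nat.eqb j 1 then - PI else 0) + (if Nat.eqb j n then PI else 0))).
  - rewrite sm_add, !sm_delta by lia. destruct (Nat.leb_spec 1 n), (Nat.leb_spec n n); try lia. ring.
  - intros j Hj. unfold cst. destruct (Nat.eqb_spec j 1), (Nat.eqb_spec j n); try lia; ring. Qed.

Theorem proposition3
  (n : nat) (hn : (2 <= n)%nat)
  (rho_s k_rho k_z k_phi k_omega : R)
  (hrho : 0 <= rho_s) (hkr : 0 < k_rho) (hkz : 0 < k_z)
  (hkp : 0 < k_phi) (hko : 0 < k_omega)
  (xi : nat -> R) (hxi : forall i, (1 <= i <= n)%nat -> 0 <= xi i)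
  (t0 : R)
  (rho phi z omega : nat -> R -> R)
  (hrho_ode : forall i t, (1 <= i <= n)%nat -> t0 <= t ->
      derivable_pt_lim (rho i) t (k_rho * (rho_s - rho i t)))
  (homega_ode : forall i t, (1 <= i <= n)%nat -> t0 <= t ->
      derivable_pt_lim (omega i) t (k_omega * (phibar n phi i t - phi i t)))
  (homega0 : forall i, (1 <= i <= n)%nat -> omega i t0 = 0)
  (hphi_ode : forall i t, (1 <= i <= n)%nat -> t0 <= t ->
      derivable_pt_lim (phi i) t
        (omega i t + k_phi * (phibar n phi i t - phi i t) + xi i))
  (hz_ode : forall i t, (1 <= i <= n)%nat -> t0 <= t ->
      derivable_pt_lim (z i) t (- k_z * z i t)) :
  let xibar := sum_f_R0 (fun j => xi (S j)) (n - 1) / INR n in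
  forall i, (1 <= i <= n)%nat ->
    exp_conv t0 (rho i) rho_s /\
    exp_conv t0 (fun t => phi i t - phibar n phi i t) 0 /\
    exp_conv t0 (fun t => omega i t + k_phi * (phibar n phi i t - phi i t) + xi i) xibar /\
    exp_conv t0 (z i) 0.
Proof.
  intros xibar i Hi.
  assert (Hn1 : (1 <= n)%nat) by lia.
  assert (HnR : 0 < INR n) by (apply lt_0_INR; lia).
  set (E := fun j t => phibar n phi j t - phi j t).
  set (W := fun j t => omega j t + xi j - xibar).
  set (ph' := fun j t => omega j t + k_phi * E j t + xi j).
  set (dE := fun j t => (1/2) * (ph' (nxt n j) t + ph' (prv n j) t) + 0 - ph' j t).
  assert (hE : forall j t, (1 <= j <= n)%nat -> t0 <= t -> derivable_pt_lim (E j) t (dE j t)).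
  { intros j t Hj Ht.
    apply (dext (fun t => (1/2) * (phi (nxt n j) t + phi (prv n j) t) + cst n j - phi j t)).
    { intros s. unfold E. rewrite phibar_rep by auto. ring. }
    apply (dminus (fun t => (1/2) * (phi (nxt n j) t + phi (prv n j) t) + cst n j) (phi j)).
    - apply (dplus (fun t => (1/2) * (phi (nxt n j) t + phi (prv n j) t)) (fun _ => cst n j)).
      + apply (dscal (1/2) (fun t => phi (nxt n j) t + phi (prv n j) t)).
        apply (dplus (phi (nxt n j)) (phi (prv n j))).
        * apply hphi_ode; auto. apply nxt_range; auto.
        * apply hphi_ode; auto. apply prv_range; auto.
      + apply dconst.
    - apply hphi_ode; auto. }
  assert (hW : forall j t, (1 <= j <= n)%nat -> t0 <= t -> derivable_pt_lim (W j) t (k_omega * E j t)).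
  { intros j t Hj Ht. replace (k_omega * E j t) with (k_omega * E j t + 0 - 0) by ring.
    apply (dminus (fun t => omega j t + xi j) (fun _ => xibar)); [|apply dconst].
    apply (dplus (omega j) (fun _ => xi j)); [|apply dconst]. apply homega_ode; auto. }
  assert (sumE : forall t, sm n (fun j => E j t) = 0).
  { intros t.
    rewrite (sm_ext n _ (fun j => ((1/2) * phi (nxt n j) t + (1/2) * phi (prv n j) t) + (cst n j + (-1) * phi j t))).
    2:{ intros j Hj. unfold E. rewrite phibar_rep by auto. ring. }
    rewrite sm_add, sm_lin, sm_add, sm_scal.
    rewrite (sm_shift n (fun j => phi j t)), (sm_shift_prv n (fun j => phi j t)), sm_cst by auto. field. }
  assert (sumO : forall t, t0 <= t -> sm n (fun j => omega j t) = 0).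
  { intros t Ht.
    assert (H0 : sm n (fun j => omega j t0) = 0).
    { rewrite (sm_ext n _ (fun _ => 0)) by (intros; auto). rewrite sm_const. ring. }
    destruct (Req_dec t t0) as [->|Hne]; auto.
    destruct (MVT_cor2 (fun s => sm n (fun j => omega j s)) (fun s => sm n (fun j => k_omega * E j s)) t0 t)
      as [c [Hc1 Hc2]]; [lra| |].
    - intros c Hc. apply (dsm n omega (fun j => k_omega * E j c)). intros; apply homega_ode; auto; lra.
    - rewrite sm_scal, sumE in Hc1. lra. }
  assert (Hxb : xibar = sm n xi / INR n).
  { unfold xibar. rewrite sum_f_sm. replace (S (n - 1)) with n by lia. reflexivity. }
  assert (sumW : forall t, t0 <= t -> sm n (fun j => W j t) = 0).
  { intros t Ht. unfold W.
    rewrite (sm_ext n _ (fun j => (omega j t + xi j) + (- xibar))) by (intros; ring).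
    rewrite sm_add, sm_add, sm_const, sumO by auto. rewrite Hxb. field. lra. }
  set (V := fun t => Vf n k_phi k_omega (fun j => E j t) (fun j => W j t)).
  assert (dV : forall t, t0 <= t -> derivable_pt_lim V t
     (Vdot n k_phi k_omega (fun j => E j t) (fun j => W j t) (fun j => dE j t) (fun j => k_omega * E j t))).
  { intros t Ht. unfold V, Vf, Vdot.
    apply (dplus (fun s => k_omega * sm n (fun j => E j s ^ 2) + 1/2 * sm n (fun j => (W (nxt n j) s - W j s) ^ 2))
                 (fun s => eps n k_phi k_omega * sm n (fun j => E j s * W j s))).
    - apply (dplus (fun s => k_omega * sm n (fun j => E j s ^ 2)) (fun s => 1/2 * sm n (fun j => (W (nxt n j) s - W j s) ^ 2))).
      + apply (dscal k_omega (fun s => sm n (fun j => E j s ^ 2))).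
        apply (dsm n (fun j s => E j s ^ 2)). intros j Hj. apply (dsq (E j)). auto.
      + apply (dscal (1/2) (fun s => sm n (fun j => (W (nxt n j) s - W j s) ^ 2))).
        apply (dsm n (fun j s => (W (nxt n j) s - W j s) ^ 2)). intros j Hj.
        apply (dsq (fun s => W (nxt n j) s - W j s)).
        apply (dminus (W (nxt n j)) (W j)); apply hW; auto. apply nxt_range; auto.
    - apply (dscal (eps n k_phi k_omega) (fun s => sm n (fun j => E j s * W j s))).
      apply (dsm n (fun j s => E j s * W j s)). intros j Hj.
      apply (dmult (E j) (W j)); auto. }
  assert (HK : forall t, t0 <= t ->
     Vdot n k_phi k_omega (fun j => E j t) (fun j => W j t) (fun j => dE j t) (fun j => k_omega * E j t)
       <= - mu n k_phi k_omega * V t /\ cc n k_omega * (sm n (fun j => E j t ^ 2) + sm n (fun j => W j t ^ 2)) <= V t).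
  { intros t Ht. apply key; auto.
    intros j Hj. unfold dE, ph', W. field. }
  destruct (consts n k_phi k_omega hn hkp hko) as (HP & He0 & He1 & He2 & He3 & Hm0 & Hm1 & Hm2 & Hc0 & Hc1 & Hc2).
  assert (Vdec : forall t, t0 <= t -> V t <= V t0 * exp (- mu n k_phi k_omega * (t - t0))).
  { apply exp_decay with (fun t => Vdot n k_phi k_omega (fun j => E j t) (fun j => W j t) (fun j => dE j t) (fun j => k_omega * E j t)); auto.
    intros; apply HK; auto. }
  set (A := sqrt (V t0 / cc n k_omega)).
  set (lam := mu n k_phi k_omega / 2).
  assert (HA : 0 <= A) by apply sqrt_pos.
  assert (bnd : forall t, t0 <= t -> Rabs (E i t) <= A * exp (- lam * (t - t0)) /\ Rabs (W i t) <= A * exp (- lam * (t - t0))).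
  { intros t Ht.
    destruct (HK t Ht) as [_ Hlow]. destruct (HK t0 (Rle_refl _)) as [_ Hlow0].
    assert (N1 : forall t, 0 <= sm n (fun j => E j t ^ 2)) by (intros; apply sm_nonneg; intros; apply pow2_ge_0).
    assert (N2 : forall t, 0 <= sm n (fun j => W j t ^ 2)) by (intros; apply sm_nonneg; intros; apply pow2_ge_0).
    assert (V0 : 0 <= V t0 / cc n k_omega).
    { unfold Rdiv. apply Rmult_le_pos; [specialize (N1 t0); specialize (N2 t0); nra| apply Rlt_le, Rinv_0_lt_compat; auto]. }
    assert (s1 : E i t ^ 2 <= sm n (fun j => E j t ^ 2)) by (apply (sm_single n (fun j => E j t ^ 2)); auto; intros; apply pow2_ge_0).
    assert (s2 : W i t ^ 2 <= sm n (fun j => W j t ^ 2)) by (apply (sm_single n (fun j => W j t ^ 2)); auto; intros; apply pow2_ge_0).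
    assert (Hv : V t / cc n k_omega <= V t0 / cc n k_omega * exp (- mu n k_phi k_omega * (t - t0))).
    { unfold Rdiv. rewrite Rmult_assoc, (Rmult_comm (/ _)), <- Rmult_assoc.
      apply Rmult_le_compat_r; [apply Rlt_le, Rinv_0_lt_compat; auto| apply Vdec; auto]. }
    assert (Hs : sm n (fun j => E j t ^ 2) + sm n (fun j => W j t ^ 2) <= V t / cc n k_omega).
    { apply (Rmult_le_reg_l (cc n k_omega)); auto. field_simplify; [|lra]. lra. }
    specialize (N1 t); specialize (N2 t).
    split; apply exp_sq_bound; auto; lra. }
  split; [|split; [|split]].
  - apply lin_decay with k_rho; auto. intros t Ht.
    replace (- k_rho * (rho i t - rho_s)) with (k_rho * (rho_s - rho i t)) by ring. auto.
  - exists A, lam. split; [unfold lam; lra|]. intros t Ht.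
    replace (phi i t - phibar n phi i t - 0) with (- E i t) by (unfold E; ring).
    rewrite Rabs_Ropp. apply bnd; auto.
  - exists ((1 + k_phi) * A), lam. split; [unfold lam; lra|]. intros t Ht.
    replace (omega i t + k_phi * (phibar n phi i t - phi i t) + xi i - xibar) with (W i t + k_phi * E i t)
      by (unfold W, E; ring).
    destruct (bnd t Ht) as [B1 B2].
    eapply Rle_trans; [apply Rabs_triang|]. rewrite Rabs_mult, (Rabs_pos_eq k_phi) by lra.
    assert (k_phi * Rabs (E i t) <= k_phi * (A * exp (- lam * (t - t0)))) by (apply Rmult_le_compat_l; lra).
    lra.
  - apply lin_decay with k_z; auto. intros t Ht.
    replace (- k_z * (z i t - 0)) with (- k_z * z i t) by ring. auto.
Qed.
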